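(* Let $\mathbf{a}_1,\mathbf{a}_2\in G$ with $\mathbf{a}_i\in G(t_i)$, where $t_i=\kappa_i+\kappa_i^{-1}$, $i=1,2$. (a) If $\mathbf{a}_1\mathbf{a}_2=\mathbf{d}(\lambda)$ with $\lambda\notin\{\pm1,\ \kappa_1\kappa_2,\ \kappa_1\kappa_2^{-1},\ \kappa_1^{-1}\kappa_2,\ \kappa_1^{-1}\kappa_2^{-1}\}$, then there exists $\mu\neq0$ such that $\mathbf{a}_1=\mathbf{h}^{\lambda}_{t_1,t_2}(-\lambda\mu)$ and $\mathbf{a}_2=\mathbf{h}^{\lambda}_{t_2,t_1}(\mu)$. (b) If $\mathbf{a}_1\mathbf{a}_2=\mathbf{d}(\kappa_1^{\epsilon_1}\kappa_2^{\epsilon_2})$ with $\epsilon_1,\epsilon_2\in\{\pm1\}$ and $\kappa_1^{\epsilon_1}\kappa_2^{\epsilon_2}\neq\pm1$, then either $\mathbf{a}_1=\mathbf{u}^+(\kappa_1^{\epsilon_1},-\kappa_1^{\epsilon_1}\alpha)$, $\mathbf{a}_2=\mathbf{u}^+(\kappa_2^{\epsilon_2},\kappa_2^{-\epsilon_2}\alpha)$ for some $\alpha\in\mathbb{C}$, or $\mathbf{a}_1=\mathbf{u}^-(\kappa_1^{\epsilon_1},-\kappa_1^{-\epsilon_1}\alpha)$, $\mathbf{a}_2=\mathbf{u}^-(\kappa_2^{\epsilon_2},\kappa_2^{\epsilon_2}\alpha)$ for some $\alpha\in\mathbb{C}$. (c) If $\mathbf{a}_1\mathbf{a}_2=-\mathbf{p}$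 and $t_1+t_2=0$, then $\mathbf{a}_1=\mathbf{u}^+(-\kappa_2^{-\epsilon},\xi)$ and $\mathbf{a}_2=\mathbf{u}^+(\kappa_2^{\epsilon},\xi+\kappa_2^{\epsilon})$ for some $\xi\in\mathbb{C}$ and $\epsilon\in\{\pm1\}$. (d) If $\mathbf{a}_1\mathbf{a}_2=-\mathbf{p}$ and $t_1+t_2\neq0$, then $\mathbf{a}_1=\mathbf{k}_{t_1,t_2}(\alpha+(t_1+t_2)/2)$ and $\mathbf{a}_2=\mathbf{k}_{t_2,t_1}(\alpha)$ for some $\alpha\in\mathbb{C}$. (e) Let $\tau=\mathrm{tr}(\mathbf{a}_1\mathbf{a}_2)$. Then the pair $(\mathbf{a}_1,\mathbf{a}_2)$ is reducible if and only if $\tau^2-t_1t_2\tau+t_1^2+t_2^2-4=0$.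
   Context: $G=\mathrm{SL}(2,\mathbb{C})$, $G(t)=\{\mathbf{x}\in G:\mathrm{tr}(\mathbf{x})=t\}$. A pair $(\mathbf{a},\mathbf{b})\in G\times G$ is reducible if $\mathbf{a},\mathbf{b}$ have a common eigenvector. Notation: $\mathbf{p}=\begin{pmatrix}1&1\\0&1\end{pmatrix}$, $\mathbf{d}(\lambda)=\begin{pmatrix}\lambda&0\\0&\lambda^{-1}\end{pmatrix}$, $\mathbf{u}^+(\kappa,\xi)=\begin{pmatrix}\kappa&\xi\\0&\kappa^{-1}\end{pmatrix}$, $\mathbf{u}^-(\kappa,\xi)=\begin{pmatrix}\kappa&0\\\xi&\kappa^{-1}\end{pmatrix}$. For $\lambda\neq\pm1$ and $\mu\neq0$, $\mathbf{h}^{\lambda}_{t_1,t_2}(\mu)=\frac{1}{\lambda-\lambda^{-1}}\begin{pmatrix}\lambda t_1-t_2&\mu\\ \delta\mu^{-1}& t_2-\lambda^{-1}t_1\end{pmatrix}$, where $\delta=(\lambda+\lambda^{-1})t_1t_2-t_1^2-t_2^2-(\lambda-\lambda^{-1})^2$ (symmetric in $t_1,t_2$). For $t_1+t_2\neq0$, $\mathbf{k}_{t_1,t_2}(\alpha)=\begin{pmatrix}\alpha+t_1/2&(t_1+t_2)^{-1}(t_1^2/4-1-\alpha^2)\\ t_1+t_2&-\alpha+t_1/2\end{pmatrix}$. *)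

(* Defs.v *)
From mathcomp Require Import all_boot all_order all_algebra.
From mathcomp Require Import complex.
From mathcomp Require Import reals.
Set Implicit Arguments. Unset Strict Implicit. Unset Printing Implicit Defensive.
Import Order.TTheory GRing.Theory Num.Theory.
Local Open Scope ring_scope.
Local Open Scope complex_scope.

Definition mx2 (C : nzRingType) (a b c d : C) : 'M[C]_2 :=
  \matrix_(i < 2, j < 2)
    if i == ord0 then (if j == ord0 then a else b)
    else (if j == ord0 then c else d).

Definition SL2 (C : comNzRingType) (x : 'M[C]_2) : Prop := \det x = 1.

Definition Gt (C : comNzRingType) (t : C) (x : 'M[C]_2) : Prop :=
  SL2 x /\ \tr x = t.

Definition mp (C : nzRingType) : 'M[C]_2 := mx2 1 1 0 1.
Definition md (C : fieldType) (l : C) : 'M[C]_2 := mx2 l 0 0 l^-1.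
Definition uplus (C : fieldType) (k xi : C) : 'M[C]_2 := mx2 k xi 0 k^-1.
Definition uminus (C : fieldType) (k xi : C) : 'M[C]_2 := mx2 k 0 xi k^-1.

Definition hdelta (C : fieldType) (l t1 t2 : C) : C :=
  (l + l^-1) * t1 * t2 - t1 ^+ 2 - t2 ^+ 2 - (l - l^-1) ^+ 2.

Definition hmx (C : fieldType) (l t1 t2 mu : C) : 'M[C]_2 :=
  (l - l^-1)^-1 *: mx2 (l * t1 - t2) mu (hdelta l t1 t2 * mu^-1) (t2 - l^-1 * t1).

Definition kmx (C : fieldType) (t1 t2 al : C) : 'M[C]_2 :=
  mx2 (al + t1 / 2%:R) ((t1 + t2)^-1 * (t1 ^+ 2 / 4%:R - 1 - al ^+ 2))
      (t1 + t2) (- al + t1 / 2%:R).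

Definition reducible (C : fieldType) (a b : 'M[C]_2) : Prop :=
  exists v : 'cV[C]_2, v != 0 /\
    (exists la : C, a *m v = la *: v) /\ (exists lb : C, b *m v = lb *: v).

(* Main.v *)
Require Import Defs.
From mathcomp Require Import all_boot all_order all_algebra.
From mathcomp Require Import complex.
From mathcomp Require Import reals.
From mathcomp Require Import ring.
Import Order.TTheory GRing.Theory Num.Theory.
Local Open Scope ring_scope.

Module Helpers.
Set Implicit Arguments. Unset Strict Implicit.
Section B.
Variable F : fieldType.
Implicit Types a b c d e f g h : F.

Lemma mx2E (M : 'M[F]_2) : M = mx2 (M ord0 ord0) (M ord0 ord_max) (M ord_max ord0) (M ord_max ord_max).
Proof.
apply/matrixP=> i j; rewrite !mxE.
by case: i => [[|[|//]] ?]; case: j => [[|[|//]] ?]; congr (M _ _); apply: val_inj.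
Qed.

Lemma mx2_inj a b c d a' b' c' d' :
  mx2 a b c d = mx2 a' b' c' d' -> [/\ a = a', b = b', c = c' & d = d'].
Proof.
move=> H.
have E i j : mx2 a b c d i j = mx2 a' b' c' d' i j by rewrite H.
by move: (E ord0 ord0) (E ord0 ord_max) (E ord_max ord0) (E ord_max ord_max); rewrite !mxE /=.
Qed.

Lemma mulmx2 a b c d e f g h :
  mx2 a b c d *m mx2 e f g h = mx2 (a*e+b*g) (a*f+b*h) (c*e+d*g) (c*f+d*h).
Proof.
apply/matrixP=> i j; rewrite !mxE !big_ord_recl big_ord0 !mxE /=.
by case: i => [[|[|//]] ?]; case: j => [[|[|//]] ?]; rewrite /= addr0.
Qed.

Lemma oppmx2 a b c d : - mx2 a b c d = mx2 (-a) (-b) (-c) (-d).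
Proof.
by apply/matrixP=> i j; rewrite !mxE; case: (i == ord0); case: (j == ord0).
Qed.

Lemma submx2 a b c d e f g h :
  mx2 a b c d - mx2 e f g h = mx2 (a-e) (b-f) (c-g) (d-h).
Proof.
by apply/matrixP=> i j; rewrite !mxE; case: (i == ord0); case: (j == ord0).
Qed.

Lemma scalemx2 s a b c d : s *: mx2 a b c d = mx2 (s*a) (s*b) (s*c) (s*d).
Proof.
by apply/matrixP=> i j; rewrite !mxE; case: (i == ord0); case: (j == ord0).
Qed.

Lemma detmx2 a b c d : \det (mx2 a b c d) = a * d - b * c.
Proof.
rewrite (expand_det_row _ ord0) !big_ord_recl big_ord0 /cofactor !mxE /=.
rewrite !det_mx11 !mxE /=.
by rewrite /bump /= expr0 expr1 mul1r addr0 mulN1r mulrN.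
Qed.

Lemma trmx2 a b c d : \tr (mx2 a b c d) = a + d.
Proof. by rewrite /mxtrace !big_ord_recl big_ord0 !mxE /= addr0. Qed.


Definition cv2 x y : 'cV[F]_2 := \matrix_(i < 2, j < 1) if i == ord0 then x else y.

Lemma cv2E (v : 'cV[F]_2) : v = cv2 (v ord0 ord0) (v ord_max ord0).
Proof.
apply/matrixP=> i j; rewrite !mxE; have -> : j = ord0 by apply: val_inj; case: j => [[]].
by case: i => [[|[|//]] ?]; congr (v _ _); apply: val_inj.
Qed.

Lemma cv2_inj x y x' y' : cv2 x y = cv2 x' y' -> x = x' /\ y = y'.
Proof.
move=> H; have E i : cv2 x y i ord0 = cv2 x' y' i ord0 by rewrite H.
by move: (E ord0) (E ord_max); rewrite !mxE.
Qed.

Lemma cv2_0 : cv2 0 0 = 0.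
Proof. by apply/matrixP=> i j; rewrite !mxE; case: (i == ord0). Qed.

Lemma mulmx2cv a b c d x y : mx2 a b c d *m cv2 x y = cv2 (a*x+b*y) (c*x+d*y).
Proof.
apply/matrixP=> i j; rewrite !mxE !big_ord_recl big_ord0 !mxE /=.
by case: i => [[|[|//]] ?]; rewrite /= addr0.
Qed.

Lemma scalecv2 s x y : s *: cv2 x y = cv2 (s*x) (s*y).
Proof. by apply/matrixP=> i j; rewrite !mxE; case: (i == ord0). Qed.

Definition QF a b c d x y := x*(c*x+d*y) - y*(a*x+b*y).

Lemma QF_eig a b c d x y : (x != 0) \/ (y != 0) -> QF a b c d x y = 0 ->
  exists la, mx2 a b c d *m cv2 x y = la *: cv2 x y.
Proof.
rewrite /QF mulmx2cv => Hxy /eqP; rewrite subr_eq0 => /eqP HQ.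
case: Hxy => [Hx|Hy].
  exists ((a*x+b*y)/x); rewrite scalecv2; congr cv2; first by field.
  by apply: (mulfI Hx); rewrite HQ; field.
exists ((c*x+d*y)/y); rewrite scalecv2; congr cv2; last by field.
by apply: (mulfI Hy); rewrite -HQ; field.
Qed.

End B.

Section E.
Variable F : fieldType.
Implicit Types a b c d e f g h : F.

Definition dK a b c d e f g h := (b*g - c*f)*(c*f - b*g) - (a*f+b*h-(e*b+f*d))*(c*e+d*g-(g*a+h*c)).

Lemma keyring a b c d e f g h :
  let t1 := a + d in let t2 := e + h in let tau := a*e+b*g + (c*f+d*h) in
  dK a b c d e f g h + (tau ^+ 2 - t1 * t2 * tau + t1 ^+ 2 + t2 ^+ 2 - 4%:R) =
  - t1^+2 * ((e*h - f*g) - 1) - t2^+2 * ((a*d-b*c) - 1) + 4%:R * ((a*d-b*c)*(e*h - f*g) - 1).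
Proof. rewrite /dK /=; ring. Qed.

Lemma QA1 a b c d k : QF a b c d b (k - a) = - b * (k^+2 - (a+d)*k + (a*d-b*c)).
Proof. rewrite /QF; ring. Qed.
Lemma QA2 a b c d k : QF a b c d (k - d) c = c * (k^+2 - (a+d)*k + (a*d-b*c)).
Proof. rewrite /QF; ring. Qed.

Lemma root_k (k x : F) : k != 0 -> (x = k \/ x = k^-1) -> x^+2 - (k + k^-1)*x + 1 = 0.
Proof. by move=> hk [->|->]; field. Qed.

Lemma prodB1 a b c d e f g h u1 u2 : u1 + u2 = d - a -> u1 * u2 = - (b*c) ->
  QF e f g h b u1 * QF e f g h b u2 = - b^+2 * dK a b c d e f g h.
Proof.
move=> hS hP.
have -> : QF e f g h b u1 * QF e f g h b u2 =
  g^+2*b^+4 + g*(h-e)*b^+3*(u1+u2) - g*f*b^+2*((u1+u2)^+2 - 2%:R*(u1*u2))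
  + (h-e)^+2*b^+2*(u1*u2) - (h-e)*b*f*(u1*u2)*(u1+u2) + f^+2*(u1*u2)^+2
  by rewrite /QF; ring.
rewrite hS hP /dK; ring.
Qed.

Lemma prodB2 a b c d e f g h u1 u2 : u1 + u2 = a - d -> u1 * u2 = - (b*c) ->
  QF e f g h u1 c * QF e f g h u2 c = - c^+2 * dK a b c d e f g h.
Proof.
move=> hS hP.
have -> : QF e f g h u1 c * QF e f g h u2 c =
  f^+2*c^+4 - f*(h-e)*c^+3*(u1+u2) - g*f*c^+2*((u1+u2)^+2 - 2%:R*(u1*u2))
  + (h-e)^+2*c^+2*(u1*u2) + (h-e)*c*g*(u1*u2)*(u1+u2) + g^+2*(u1*u2)^+2
  by rewrite /QF; ring.
rewrite hS hP /dK; ring.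
Qed.


Lemma det0_of (p q r s x y : F) : p*x+q*y = 0 -> r*x+s*y = 0 -> (x != 0 \/ y != 0) -> p*s - q*r = 0.
Proof.
move=> h1 h2 [hx|hy].
  apply: (mulIf hx); rewrite mul0r.
  have -> : (p*s - q*r)*x = s*(p*x+q*y) - q*(r*x+s*y) by ring.
  by rewrite h1 h2 !mulr0 subrr.
apply: (mulIf hy); rewrite mul0r.
have -> : (p*s - q*r)*y = p*(r*x+s*y) - r*(p*x+q*y) by ring.
by rewrite h1 h2 !mulr0 subrr.
Qed.

Lemma red_of_QF a b c d e f g h (x y : F) : (x != 0 \/ y != 0) ->
  QF a b c d x y = 0 -> QF e f g h x y = 0 -> reducible (mx2 a b c d) (mx2 e f g h).
Proof.
move=> hxy h1 h2; exists (cv2 x y); split; last split.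
- apply/eqP; rewrite -cv2_0 => /cv2_inj [hx hy].
  by case: hxy; rewrite ?hx ?hy eqxx.
- exact: QF_eig.
- exact: QF_eig.
Qed.

Lemma partE a b c d e f g h (k k2 : F) : k != 0 -> k2 != 0 -> a*d-b*c = 1 -> e*h-f*g = 1 ->
  a + d = k + k^-1 -> e + h = k2 + k2^-1 ->
  let tau := \tr (mx2 a b c d *m mx2 e f g h) in
  reducible (mx2 a b c d) (mx2 e f g h) <->
  tau^+2 - (k + k^-1)*(k2+k2^-1)*tau + (k+k^-1)^+2 + (k2+k2^-1)^+2 - 4%:R = 0.
Proof.
move=> hk hk2 H1 H2 Ht1 Ht2 tau; rewrite /tau -Ht1 -Ht2 mulmx2 trmx2.
have KP := keyring a b c d e f g h; rewrite /= H1 H2 in KP.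
have {}KP : dK a b c d e f g h + ((a * e + b * g + (c * f + d * h)) ^+ 2 -
        (a + d) * (e + h) * (a * e + b * g + (c * f + d * h)) + 
        (a + d) ^+ 2 + (e + h) ^+ 2 - 4%:R) = 0 by rewrite KP; ring.
split.
  case=> v [hv [[la Ha] [lb Hb]]].
  have HK: (mx2 a b c d *m mx2 e f g h - mx2 e f g h *m mx2 a b c d) *m v = 0.
    by rewrite mulmxBl -!mulmxA Hb Ha -!scalemxAr Ha Hb !scalerA mulrC subrr.
  rewrite !mulmx2 submx2 (cv2E v) mulmx2cv -cv2_0 in HK.
  case/cv2_inj: HK => h1 h2.
  have hxy : v ord0 ord0 != 0 \/ v ord_max ord0 != 0.
    case: (eqVneq (v ord0 ord0) 0) => [hx|]; last by left.
    case: (eqVneq (v ord_max ord0) 0) => [hy|]; last by right.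
    by move: hv; rewrite (cv2E v) hx hy cv2_0 eqxx.
  have := det0_of h1 h2 hxy => hD.
  have hdK : dK a b c d e f g h = 0.
    rewrite -hD /dK; ring.
  by move: KP; rewrite hdK add0r.
move=> HP; have hdK : dK a b c d e f g h = 0 by move: KP; rewrite HP addr0.
have hd : d = k + k^-1 - a by rewrite -Ht1; ring.
have ha : a = k + k^-1 - d by rewrite -Ht1; ring.
have hbc : b*c = a*d - 1 by rewrite -H1; ring.
have rk := root_k hk. have rk2 := root_k hk2.
case: (eqVneq b 0) => [hb0|hb].
  case: (eqVneq c 0) => [hc0|hc].
    have : f * g * (d - a)^+2 = 0 by rewrite -hdK /dK hb0 hc0; ring.
    move/eqP; rewrite !mulf_eq0 orbb subr_eq0 => /orP[/orP[/eqP hf|/eqP hg]|/eqP hda].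
    - apply: (@red_of_QF _ _ _ _ _ _ _ _ 0 1); first by right; exact: oner_neq0.
        by rewrite /QF hb0; ring.
      by rewrite /QF hf; ring.
    - apply: (@red_of_QF _ _ _ _ _ _ _ _ 1 0); first by left; exact: oner_neq0.
        by rewrite /QF hc0; ring.
      by rewrite /QF hg; ring.
    case: (eqVneq g 0) => [hg|hg].
      apply: (@red_of_QF _ _ _ _ _ _ _ _ 1 0); first by left; exact: oner_neq0.
        by rewrite /QF hc0; ring.
      by rewrite /QF hg; ring.
    apply: (@red_of_QF _ _ _ _ _ _ _ _ (k2 - h) g); first by right.
      by rewrite /QF hb0 hc0 hda; ring.
    by rewrite QA2 Ht2 H2 rk2 ?mulr0 //; left.
  have hS : (k - d) + (k^-1 - d) = a - d by rewrite ha; ring.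
  have hP : (k - d) * (k^-1 - d) = - (b*c) by rewrite hbc ha; field.
  have := prodB2 e f g h hS hP; rewrite hdK mulr0 => /eqP; rewrite mulf_eq0 => /orP[]/eqP hQ.
    apply: (@red_of_QF _ _ _ _ _ _ _ _ (k - d) c); [by right | | by []].
    by rewrite QA2 Ht1 H1 rk ?mulr0 //; left.
  apply: (@red_of_QF _ _ _ _ _ _ _ _ (k^-1 - d) c); [by right | | by []].
  by rewrite QA2 Ht1 H1 rk ?mulr0 //; right.
have hS : (k - a) + (k^-1 - a) = d - a by rewrite hd; ring.
have hP : (k - a) * (k^-1 - a) = - (b*c) by rewrite hbc hd; field.
have := prodB1 e f g h hS hP; rewrite hdK mulr0 => /eqP; rewrite mulf_eq0 => /orP[]/eqP hQ.
  apply: (@red_of_QF _ _ _ _ _ _ _ _ b (k - a)); [by left | | by []].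
  by rewrite QA1 Ht1 H1 rk ?mulr0 //; left.
apply: (@red_of_QF _ _ _ _ _ _ _ _ b (k^-1 - a)); [by left | | by []].
by rewrite QA1 Ht1 H1 rk ?mulr0 //; right.
Qed.

End E.

Section A.
Variable F : fieldType.
Implicit Types a b c d e f g h l p q r s : F.

Lemma adj_solve a b c d e f g h p q r s : a* d - b* c = 1 ->
  mx2 a b c d *m mx2 e f g h = mx2 p q r s ->
  [/\ e = d * p - b * r, f = d* q - b* s, g = a * r - c * p & h = a* s - c* q].
Proof.
move=> H1; rewrite mulmx2 => /mx2_inj [<- <- <- <-].
have E x : x = (a* d-b* c)* x by rewrite H1 mul1r.
by split; [rewrite {1}(E e)|rewrite {1}(E f)|rewrite {1}(E g)|rewrite {1}(E h)]; ring.
Qed.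

Lemma l_neq0 a b c d l : a* d - b* c = 1 ->
  (d* l - b*0) * (a* l^-1 - c*0) - (d*0 - b* l^-1)* (a*0 - c* l) = 1 -> l != 0.
Proof.
move=> H1 H2; apply/eqP=> hl; move: H2; rewrite hl invr0.
by rewrite !(mulr0, mul0r, subr0, sub0r, oppr0) => /esym/eqP; rewrite oner_eq0.
Qed.

Lemma lmlinv l : l != 1 -> l != -1 -> l != 0 -> l - l^-1 != 0.
Proof.
move=> h1 h2 h0; apply/eqP=> h.
have : (l - 1)* (l + 1) = 0.
  have -> : (l - 1)* (l+1) = (l - l^-1)* l by field.
  by rewrite h mul0r.
move/eqP; rewrite mulf_eq0 subr_eq0 addr_eq0 => /orP[]; apply/negP; by [].
Qed.

Lemma quad_roots (x k : F) : k != 0 -> (x - k) * (x - k^-1) = 0 -> x = k \/ x = k^-1.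
Proof.
by move=> _ /eqP; rewrite mulf_eq0 !subr_eq0 => /orP[]/eqP ->; [left|right].
Qed.

Lemma partA a b c d e f g h (k1 k2 : F) l : k1 != 0 -> k2 != 0 -> a* d-b* c = 1 -> e* h-f* g= 1 ->
  a+d = k1+k1^-1 -> e+h = k2+k2^-1 -> l != 1 -> l != -1 -> l != k1* k2 -> l != k1* k2^-1 ->
  l != k1^-1* k2 -> l != k1^-1* k2^-1 -> mx2 a b c d *m mx2 e f g h = md l ->
  exists mu, mu != 0 /\ mx2 a b c d = hmx l (k1+k1^-1) (k2+k2^-1) (-l* mu) /\
                        mx2 e f g h = hmx l (k2+k2^-1) (k1+k1^-1) mu.
Proof.
move=> hk1 hk2 H1 H2 Ht1 Ht2 hl1 hl2 hl3 hl4 hl5 hl6 Hp.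
have [he hf hg hh] := adj_solve H1 Hp.
have hl : l != 0 by apply: (l_neq0 H1); rewrite -he -hf -hg -hh.
have hll := lmlinv hl1 hl2 hl.
have hdl : d* l + a* l^-1 = k2 + k2^-1 by rewrite -Ht2 he hh; ring.
have hb : b != 0.
  apply/eqP=> hb0.
  have ha : a = k1 \/ a = k1^-1.
    apply: quad_roots => //.
    have -> : (a - k1) * (a - k1^-1) = a^+2 - (k1 + k1^-1)* a + k1* k1^-1 by ring.
    by rewrite mulfV // -Ht1 -H1 hb0; ring.
  have hx : d* l = k2 \/ d* l = k2^-1.
    apply: quad_roots => //.
    have -> : (d* l - k2) * (d* l - k2^-1) = (d* l)^+2 - (k2 + k2^-1)* (d* l) + k2* k2^-1 by ring.
    by rewrite mulfV // -hdl -H1 hb0; field.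
  have hlx : l = a * (d* l) by rewrite mulrA -[l in LHS]mul1r -H1 hb0; ring.
  case: ha hx => ha [] hx; rewrite ha hx in hlx.
  - by move: hl3; rewrite hlx eqxx.
  - by move: hl4; rewrite hlx eqxx.
  - by move: hl5; rewrite hlx eqxx.
  - by move: hl6; rewrite hlx eqxx.
have hc : c = (a* d - 1)/b by rewrite -H1; field.
exists (-b* (l - l^-1)/l); split.
  by rewrite !mulf_neq0 ?oppr_eq0 ?invr_eq0.
rewrite /hmx !scalemx2 /hdelta -Ht1 -hdl he hf hg hh hc.
have hll2 : l * l - 1 != 0.
  have -> : l * l - 1 = (l - l^-1) * l by field.
  by rewrite mulf_neq0.
split; congr mx2; field.
all: by rewrite ?oppr_eq0 ?hl ?hll2 ?hb.
Qed.


Lemma partB a b c d e f g h (x y : F) : x != 0 -> y != 0 -> a * d - b * c = 1 ->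
  e * h - f * g = 1 -> a + d = x + x^-1 -> e + h = y + y^-1 -> x * y != 1 -> x * y != -1 ->
  mx2 a b c d *m mx2 e f g h = md (x * y) ->
  (exists al, mx2 a b c d = uplus x (- x * al) /\ mx2 e f g h = uplus y (y^-1 * al)) \/
  (exists al, mx2 a b c d = uminus x (- x^-1 * al) /\ mx2 e f g h = uminus y (y * al)).
Proof.
move=> hx hy H1 H2 Ht1 Ht2 hl1 hl2 Hp.
have [he hf hg hh] := adj_solve H1 Hp.
have hl : x * y != 0 by rewrite mulf_neq0.
have hll := lmlinv hl1 hl2 hl.
have hdl : d * (x * y) + a * (x * y)^-1 = y + y^-1 by rewrite -Ht2 he hh; ring.
have hd : d = x^-1.
  apply: (mulfI hll).
  have -> : (x * y - (x * y)^-1) * d = (d * (x * y) + a * (x * y)^-1) - (a + d) * (x * y)^-1 by ring.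
  rewrite hdl Ht1; field.
  by rewrite hx hy.
have ha : a = x by rewrite -[a](addrK d) Ht1 hd; ring.
subst a d.
have : b * c = 0.
  have -> : b * c = x * x^-1 - (x * x^-1 - b * c) by ring.
  by rewrite H1 mulfV // subrr.
move/eqP; rewrite mulf_eq0 => /orP[]/eqP hbc.
  right; exists (- c * x); subst b; rewrite /uminus he hf hg hh; split; congr mx2; field; by rewrite ?hx ?hy.
left; exists (- b / x); subst c; rewrite /uplus he hf hg hh; split; congr mx2; field.
all: by rewrite ?hx ?hy.
Qed.

Lemma partC a b c d e f g h t1 (k : F) : k != 0 -> a * d - b * c = 1 ->
  e * h - f * g = 1 -> a + d = t1 -> e + h = k + k^-1 -> t1 + (k + k^-1) = 0 ->
  mx2 a b c d *m mx2 e f g h = - mp F ->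
  exists y, (y = k \/ y = k^-1) /\ mx2 a b c d = uplus (- y^-1) b /\ mx2 e f g h = uplus y (b + y).
Proof.
move=> hk H1 H2 Ht1 Ht2 Hs Hp.
rewrite /mp oppmx2 in Hp.
have [he hf hg hh] := adj_solve H1 Hp.
have hc : c = 0 by rewrite -Hs -Ht1 -Ht2 he hh; ring.
subst c.
have hd0 : d != 0 by apply/eqP=> hd0; move: H1; rewrite hd0 !(mulr0, mul0r, subr0) => /eqP; rewrite eq_sym oner_eq0.
have hy : - d = k \/ - d = k^-1.
  apply: quad_roots => //.
  have -> : (- d - k) * (- d - k^-1) = d^+2 + (k + k^-1) * d + k * k^-1 by ring.
  have ht : k + k^-1 = - (a + d) by apply/eqP; rewrite Ht1 -addr_eq0 addrC Hs.
  by rewrite mulfV // ht -H1; ring.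
have ha : a = d^-1 by apply: (mulIf hd0); rewrite mulVf // -H1; ring.
subst a.
exists (- d); split => //; rewrite /uplus he hf hg hh; split; congr mx2; field.
all: by rewrite ?oppr_eq0 ?oner_eq0 ?hd0.
Qed.

Lemma partD a b c d e f g h t1 t2 : (2%:R : F) != 0 -> a * d - b * c = 1 ->
  e * h - f * g = 1 -> a + d = t1 -> e + h = t2 -> t1 + t2 != 0 ->
  mx2 a b c d *m mx2 e f g h = - mp F ->
  exists al, mx2 a b c d = kmx t1 t2 (al + (t1 + t2) / 2%:R) /\ mx2 e f g h = kmx t2 t1 al.
Proof.
move=> h2 H1 H2 Ht1 Ht2 Hs Hp.
rewrite /mp oppmx2 in Hp.
have [he hf hg hh] := adj_solve H1 Hp.
have hc : c = t1 + t2 by rewrite -Ht1 -Ht2 he hh; ring.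
have hc0 : c != 0 by rewrite hc.
have hb : b = (a * d - 1) / c by rewrite -H1; field.
have hd : d = t1 - a by rewrite -Ht1; ring.
have h4 : (4%:R : F) != 0.
  by rewrite (_ : 4%:R = 2%:R * 2%:R) ?mulf_neq0 // -natrM.
exists (a - t1 - t2 / 2%:R); rewrite /kmx he hf hg hh hb hd hc; split; congr mx2; field.
all: by rewrite ?h2 ?h4 ?Hs ?[t2 + t1]addrC ?Hs.
Qed.

End A.

End Helpers.
Import Helpers.

Local Open Scope complex_scope.

Lemma powk (F : fieldType) (k : F) (e : int) : k != 0 -> (e == 1) || (e == -1) ->
  k ^ e != 0 /\ k ^ e + (k ^ e)^-1 = k + k^-1.
Proof.
move=> hk he; split; first exact: expfz_neq0.
by case/orP: he => /eqP ->; rewrite ?expr1z ?exprN1 ?invrK // addrC.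
Qed.

Theorem mainTheorem3 (R : realType) (a1 a2 : 'M[R[i]]_2) (k1 k2 : R[i]) :
  k1 != 0 -> k2 != 0 ->
  Gt (k1 + k1^-1) a1 -> Gt (k2 + k2^-1) a2 ->
  let t1 := k1 + k1^-1 in
  let t2 := k2 + k2^-1 in
  (* (a) *)
  (forall l : R[i],
     l != 1 -> l != -1 ->
     l != k1 * k2 -> l != k1 * k2^-1 -> l != k1^-1 * k2 -> l != k1^-1 * k2^-1 ->
     a1 *m a2 = md l ->
     exists mu : R[i], mu != 0 /\
       a1 = hmx l t1 t2 (- l * mu) /\ a2 = hmx l t2 t1 mu) /\
  (* (b) *)
  (forall e1 e2 : int, (e1 == 1) || (e1 == -1) -> (e2 == 1) || (e2 == -1) ->
     k1 ^ e1 * k2 ^ e2 != 1 -> k1 ^ e1 * k2 ^ e2 != -1 ->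
     a1 *m a2 = md (k1 ^ e1 * k2 ^ e2) ->
     (exists al : R[i],
        a1 = uplus (k1 ^ e1) (- k1 ^ e1 * al) /\
        a2 = uplus (k2 ^ e2) (k2 ^ (- e2) * al)) \/
     (exists al : R[i],
        a1 = uminus (k1 ^ e1) (- k1 ^ (- e1) * al) /\
        a2 = uminus (k2 ^ e2) (k2 ^ e2 * al))) /\
  (* (c) *)
  (a1 *m a2 = - mp R[i] -> t1 + t2 = 0 ->
     exists (xi : R[i]) (e : int), ((e == 1) || (e == -1)) /\
       a1 = uplus (- k2 ^ (- e)) xi /\ a2 = uplus (k2 ^ e) (xi + k2 ^ e)) /\
  (* (d) *)
  (a1 *m a2 = - mp R[i] -> t1 + t2 != 0 ->
     exists al : R[i],
       a1 = kmx t1 t2 (al + (t1 + t2) / 2%:R) /\ a2 = kmx t2 t1 al) /\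
  (* (e) *)
  (let tau := \tr (a1 *m a2) in
   reducible a1 a2 <->
   tau ^+ 2 - t1 * t2 * tau + t1 ^+ 2 + t2 ^+ 2 - 4%:R = 0).
Proof.
move=> hk1 hk2 [HS1 HT1] [HS2 HT2] t1 t2.
have [a [b [c [d Ea1]]]] : exists a b c d, a1 = mx2 a b c d by do 4 eexists; exact: mx2E.
have [e [f [g [h Ea2]]]] : exists a b c d, a2 = mx2 a b c d by do 4 eexists; exact: mx2E.
subst a1 a2; move: HS1 HS2 HT1 HT2; rewrite /SL2 !detmx2 !trmx2 => HS1 HS2 HT1 HT2.
rewrite /t1 /t2.
split; last split; last split; last split.
- by move=> l *; apply: partA.
- move=> e1 e2 he1 he2 hn1 hn2 Hp.
  have [hx Hx] := @powk _ _ _ hk1 he1; have [hy Hy] := @powk _ _ _ hk2 he2.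
  rewrite -!invr_expz; apply: partB => //; by rewrite Hx || rewrite Hy.
- move=> Hp Hs.
  have [y [hy [E1 E2]]] := partC hk2 HS1 HS2 HT1 HT2 Hs Hp.
  case: hy => hy; subst y.
    by exists b, 1; rewrite eqxx expr1z exprN1.
  by rewrite invrK in E1; exists b, (-1); rewrite eqxx orbT opprK expr1z exprN1.
- move=> Hp Hs.
  have h2 : (2%:R : R[i]) != 0 by rewrite pnatr_eq0.
  exact: (partD h2 HS1 HS2 HT1 HT2 Hs Hp).
- exact: (partE hk1 hk2 HS1 HS2 HT1 HT2).
Qed.
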